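(* Let $\Omega$ be a bounded measurable set in $\mathbb{R}^d$, let $\mu$ be a positive, locally finite Borel measure on $\mathbb{R}^d$, and let $\Sigma\subset\mathbb{R}^d$ be measurable. Suppose $\mathbf{1}_\Omega\ast\mu=0$ a.e. on $\Sigma^c=\mathbb{R}^d\setminus\Sigma$. Then $m((\Omega+t)\cap\Sigma^c)=0$ for every $t\in\operatorname{supp}(\mu)$.
   Context: $m$ is Lebesgue measure, $\operatorname{supp}(\mu)$ the closed support of $\mu$. *)

(* Defs.v *)
From HB Require Import structures.
From mathcomp Require Import all_boot all_order all_algebra.
From mathcomp Require Import all_classical all_reals all_analysis.
Set Implicit Arguments. Unset Strict Implicit. Unset Printing Implicit Defensive.
Import Order.TTheory GRing.Theory Num.Theory.
Import numFieldNormedType.Exports.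
Local Open Scope classical_set_scope.
Local Open Scope ring_scope.

Definition Rd (R : realType) (d : nat) := g_sigma_algebraType (@open 'rV[R]_d).

Definition box (R : realType) (d : nat) (a b : 'rV[R]_d) : set 'rV[R]_d :=
  [set x | forall i, a 0 i <= x 0 i <= b 0 i].
Definition box_vol (R : realType) (d : nat) (a b : 'rV[R]_d) : R :=
  \prod_(i < d) (b 0 i - a 0 i).

(* Lebesgue-null sets: m(A) = 0 for the Lebesgue (outer) measure m on R^d,
   i.e. A can be covered by countably many boxes of arbitrarily small total
   volume. *)
Definition lebesgue_null (R : realType) (d : nat) (A : set 'rV[R]_d) : Prop :=
  forall eps : R, 0 < eps ->
    exists a b : nat -> 'rV[R]_d,
      [/\ forall n i, a n 0 i <= b n 0 i,
          A `<=` \bigcup_n box (a n) (b n) &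
          (\sum_(0 <= n <oo) (box_vol (a n) (b n))%:E < eps%:E)%E].

Definition locally_finite (R : realType) (d : nat)
    (mu : {measure set (Rd R d) -> \bar R}) : Prop :=
  forall x : 'rV[R]_d, exists U : set 'rV[R]_d,
    [/\ open U, U x & (mu U < +oo)%E].

Definition msupport (R : realType) (d : nat)
    (mu : {measure set (Rd R d) -> \bar R}) : set 'rV[R]_d :=
  [set t | forall U : set 'rV[R]_d, open U -> U t -> (0 < mu U)%E].

Definition conv_ind (R : realType) (d : nat)
    (mu : {measure set (Rd R d) -> \bar R}) (Om : set 'rV[R]_d)
    (x : 'rV[R]_d) : \bar R :=
  (\int[mu]_(y in [set: Rd R d]) (\1_Om (x - (y : 'rV[R]_d)) : R)%:E)%E.

Definition translate (R : realType) (d : nat) (Om : set 'rV[R]_d) (t : 'rV[R]_d)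
  : set 'rV[R]_d := [set x + t | x in Om].

(* Main.v *)
Require Import Defs.
From HB Require Import structures.
From mathcomp Require Import all_boot all_order all_algebra.
From mathcomp Require Import all_classical all_reals all_analysis.
From mathcomp Require Import lra ring.
Import Order.TTheory GRing.Theory Num.Theory.
Import numFieldNormedType.Exports.
Local Open Scope classical_set_scope.
Local Open Scope ring_scope.
Set Implicit Arguments. Unset Strict Implicit. Unset Printing Implicit Defensive.
Section PartA.
Variables (R : realType) (d : nat).
Local Notation V := 'rV[R]_d.+1.
Local Open Scope ereal_scope.

Definition pvol (p : V * V) : R := box_vol p.1 p.2.
Definition pbox (p : V * V) : set V := box p.1 p.2.
Definition pcover (A : set V) (F : nat -> V * V) :=
  (forall n i, (F n).1 0 i <= (F n).2 0 i)%R /\ A `<=` \bigcup_n pbox (F n).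

Definition lam (A : set V) : \bar R :=
  ereal_inf [set \sum_(n <oo) (pvol (F n))%:E | F in pcover A].

Lemma pvol_ge0 (p : V * V) : (forall i, p.1 0 i <= p.2 0 i)%R -> (0 <= pvol p)%R.
Proof. move=> h; rewrite /pvol /box_vol; apply: prodr_ge0 => i _; rewrite subr_ge0; exact: h. Qed.

Lemma lam_ge0 (A : set V) : 0 <= lam A.
Proof.
apply: le_ereal_inf_tmp => _ [F [hF _] <-]; apply: nneseries_ge0 => n _ _.
by rewrite lee_fin; apply: pvol_ge0.
Qed.

Lemma lam_le_cover (A : set V) F : pcover A F -> lam A <= \sum_(n <oo) (pvol (F n))%:E.
Proof. by move=> h; apply: ereal_inf_lbound; exists F. Qed.

Lemma lam0 : lam set0 = 0.
Proof.
apply/eqP; rewrite eq_le lam_ge0 andbT.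
have -> : 0 = \sum_(n <oo) (pvol ((fun _ => (0:V, 0:V)) n))%:E.
  rewrite eseries0 // => n _ _; rewrite /pvol /box_vol big_ord_recl /= subrr mul0r //.
by apply: lam_le_cover; split => // n i; rewrite /=.
Qed.

Lemma le_lam : {homo lam : A B / A `<=` B >-> A <= B}.
Proof.
move=> A B AB; apply/ereal_inf_le_tmp => x [F [hF BF] <-].
by exists F => //; split => //; apply: subset_trans AB BF.
Qed.

Lemma lam_sigma_subadditive : sigma_subadditive lam.
Proof.
move=> A; have [[i ioo]|] := pselect (exists i, lam (A i) = +oo).
  rewrite (eseries_pinfty _ _ ioo) ?leey// => n _.
  by rewrite -ltNye (lt_le_trans _ (lam_ge0 _)).
rewrite -forallNE => Aoo.
suff add2e (e : {posnum R}) :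
    lam (\bigcup_n A n) <= \sum_(i <oo) lam (A i) + e%:num%:E.
  by apply/lee_addgt0Pr => _/posnumP[].
rewrite (le_trans _ (epsilon_trick _ _ _))//; last first.
  by move=> n; exact: lam_ge0.
pose P n (B : (nat -> V * V)) := pcover (A n) B /\
  \sum_(k <oo) (pvol (B k))%:E <= lam (A n) + (e%:num / (2 ^ n.+1)%:R)%:E.
have [G PG] : {G : (nat -> (nat -> V * V)) & forall n, P n (G n)}.
  apply: (@choice _ _ P) => n; rewrite /P /lam.
  set S := (X in ereal_inf X); move infS : (ereal_inf S) => iS.
  case: iS infS => [r Sr|Soo|Soo].
  - have en1 : (0 < e%:num / (2 ^ n.+1)%:R)%R by [].
    have /(lb_ereal_inf_adherent en1) : ereal_inf S \is a fin_num by rewrite Sr.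
    move=> [x [B hB muBx] xS].
    by exists B; split => //; rewrite muBx -Sr; exact/ltW.
  - by have := Aoo n; rewrite /lam Soo.
  - suff : lbound S 0 by move/le_ereal_inf_tmp; rewrite Soo.
    move=> /= _ [B [hB _] <-]; apply: nneseries_ge0 => k _ _.
    by rewrite lee_fin; apply: pvol_ge0.
have muG_ge0 x : 0 <= ((fun p => (pvol p)%:E) \o uncurry G) x.
  case: x => a b; rewrite /= lee_fin; apply: pvol_ge0 => i; case: (PG a) => -[hh _] _.
  exact: hh.
apply: (@le_trans _ _ (\esum_(i in setT) ((fun p => (pvol p)%:E) \o uncurry G) i)).
  have /card_esym/ppcard_eqP[f] := card_nat2.
  apply: (@le_trans _ _ (\sum_(n <oo) (pvol ((uncurry G \o f) n))%:E)).
    apply: lam_le_cover.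
    split => [n i|]; first by case: (PG (f n).1) => -[hh _] _; rewrite /= /uncurry; case: (f n) hh => a b /=; apply.
    apply: (@subset_trans _  (\bigcup_n \bigcup_k pbox (G n k))) => [t [i _]|].
      by case: (PG i) => -[_ +] _ => /[apply] -[j _ ?]; exists i => //; exists j.
    move=> t [i _ [j _ Bijt]]; exists (f^-1%FUN (i, j)) => //=.
    by rewrite invK ?inE.
  rewrite -(esum_pred_image ((fun p => (pvol p)%:E) \o uncurry G) _ xpredT) ?[fun=> _]set_true//.
    by rewrite image_eq.
rewrite (_ : esum _ _ = \sum_(i <oo) \sum_(j <oo ) (pvol (G i j))%:E); last first.
  pose J : nat -> set (nat * nat) := fun i => [set (i, j) | j in setT].
  rewrite (_ : setT = \bigcup_k J k); last first.
    by rewrite predeqE => -[a b]; split => // _; exists a => //; exists b.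
  rewrite esum_bigcupT /=; last 2 first.
    - apply/trivIsetP => i j _ _ ij.
      rewrite predeqE => -[n m] /=; split => //= -[] [_] _ [<-{n} _].
      by move=> [m' _] [] /esym/eqP; rewrite (negbTE ij).
    - by move=> /= [n m]; apply: (muG_ge0 (n, m)).
  rewrite -(image_id [set: nat]) -fun_true esum_pred_image//; last first.
    move=> n _; apply: esum_ge0 => -[a b] _; exact: (muG_ge0 (a, b)).
  apply: eq_eseriesr => /= j _.
  rewrite -(esum_pred_image ((fun p => (pvol p)%:E) \o uncurry G) (pair j) predT)//=; last first.
    by move=> ? ? _ _; exact: (@can_inj _ _ _ snd).
    by move=> n _; exact: (muG_ge0 (j, n)).
  by congr esum; rewrite predeqE => -[a b]; split; move=> [i _ <-]; exists i.
apply: lee_lim.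
- apply: is_cvg_nneseries => n *.
  by apply: nneseries_ge0 => m *; exact: (muG_ge0 (n, m)).
- by apply: is_cvg_nneseries => n *; apply: adde_ge0 => //; exact: lam_ge0.
- by near=> n; apply: lee_sum => i _; exact: (PG i).2.
Unshelve. all: by end_near. Qed.

HB.instance Definition _ := isOuterMeasure.Build R ('rV[R]_d.+1) lam lam0 lam_ge0 le_lam lam_sigma_subadditive.

End PartA.

Section PartB.
Variables (R : realType) (d : nat).
Local Notation V := 'rV[R]_d.+1.

Definition setc (v : V) (i : 'I_d.+1) (f : R -> R) : V :=
  \row_j (if j == i then f (v 0 j) else v 0 j).

Lemma setcE v i f j : setc v i f 0 j = if j == i then f (v 0 j) else v 0 j.
Proof. by rewrite /setc mxE. Qed.

Lemma box_vol_setc (a b : V) i f g :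
  box_vol (setc a i f) (setc b i g) = (g (b 0 i) - f (a 0 i)) *
    \prod_(j < d.+1 | j != i) (b 0 j - a 0 j).
Proof.
rewrite /box_vol (bigD1 i) //= !setcE eqxx; congr (_ * _).
by apply: eq_bigr => j /negbTE ji; rewrite !setcE ji.
Qed.


Definition hs (i : 'I_d.+1) (c : R) : set V := [set x | x 0 i <= c].

Local Open Scope ereal_scope.

Lemma hs_cara i c : (@lam R d).-caratheodory (hs i c).
Proof.
apply: le_caratheodory_measurable => X.
apply: le_ereal_inf_tmp => _ [F [hF XF] <-].
pose lo (p : V * V) := (setc p.1 i (fun x => Num.min x c), setc p.2 i (fun x => Num.min x c)).
pose hi (p : V * V) := (setc p.1 i (fun x => Num.max x c), setc p.2 i (fun x => Num.max x c)).
have hlo n j : ((lo (F n)).1 0 j <= (lo (F n)).2 0 j)%R.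
  rewrite /= !setcE; case: ifP => _; [apply: le_min2 => //|]; exact: hF.
have hhi n j : ((hi (F n)).1 0 j <= (hi (F n)).2 0 j)%R.
  rewrite /= !setcE; case: ifP => _; [apply: le_max2 => //|]; exact: hF.
have volE n : pvol (F n) = (pvol (lo (F n)) + pvol (hi (F n)))%R.
  rewrite /pvol /= !box_vol_setc -mulrDl.
  have -> : forall x y : R, (Num.min y c - Num.min x c + (Num.max y c - Num.max x c) = y - x)%R.
    move=> x y; have := addr_min_max x c; have := addr_min_max y c.
    by move=> h1 h2; apply/eqP; rewrite -subr_eq0; apply/eqP; lra.
  by rewrite /box_vol (bigD1 i).
apply: (@le_trans _ _ (\sum_(n <oo) (pvol (lo (F n)))%:E + \sum_(n <oo) (pvol (hi (F n)))%:E)).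
  apply: leeD; apply: lam_le_cover; split => //.
  - move=> x [Xx hx]; have [n _ hn] := XF x Xx; exists n => // j; rewrite /= !setcE.
    have := hn j; case: ifP => [/eqP -> | _] // /andP[h1 h2].
    have hx' : (x 0 i <= c)%R := hx.
    by rewrite ge_min h1 le_min h2 hx'.
  - move=> x [Xx hx]; have [n _ hn] := XF x Xx; exists n => // j; rewrite /= !setcE.
    have := hn j; case: ifP => [/eqP -> | _] // /andP[h1 h2].
    have hx' : (c < x 0 i)%R by rewrite ltNge; apply/negP => h; apply: hx.
    by rewrite ge_max h1 (ltW hx') le_max h2.
rewrite -nneseriesD.
- apply: lee_nneseries => [n _ _|n _].
    by apply: adde_ge0; rewrite lee_fin; apply: pvol_ge0.
  by rewrite volE.
- by move=> n _ _; rewrite lee_fin; apply: pvol_ge0.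
- by move=> n _ _; rewrite lee_fin; apply: pvol_ge0.
Qed.

End PartB.

Import numFieldNormedType.Exports.
Section PartC.
Variables (R : realType) (d : nat).
Local Notation V := 'rV[R]_d.+1.
Local Notation lamd := (@lam R d).
Local Notation CM := (lamd.-cara.-measurable).

Lemma ball_coord (n : nat) (x y : 'rV[R]_n) (e : R) :
  ball x e y -> forall i, `|x 0 i - y 0 i| < e.
Proof. by move=> [_ h] i; have := h 0 i. Qed.

Lemma coord_ball (n : nat) (x y : 'rV[R]_n) (e : R) :
  0 < e -> (forall i, `|x 0 i - y 0 i| < e) -> ball x e y.
Proof. by move=> e0 h; split => // i j; rewrite (ord1 i) /ball /=; exact: h. Qed.

Definition ob (n : nat) (a b : 'rV[R]_n) : set 'rV[R]_n :=
  [set x | forall i, a 0 i < x 0 i < b 0 i].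

Definition rq (n : nat) (q : 'rV[rat]_n) : 'rV[R]_n := map_mx ratr q.

Lemma rqE n (q : 'rV[rat]_n) i : rq q 0 i = ratr (q 0 i).
Proof. by rewrite /rq mxE. Qed.

Lemma rat_box (n : nat) (x : 'rV[R]_n) (r : R) : 0 < r ->
  exists q : 'rV[rat]_n * 'rV[rat]_n,
    ob (rq q.1) (rq q.2) x /\ ob (rq q.1) (rq q.2) `<=` ball x r.
Proof.
move=> r0.
have ha : forall i : 'I_n, exists q : rat, ratr q \in `](x 0 i - r), (x 0 i)[.
  by move=> i; apply: rat_in_itvoo; rewrite gtrBl.
have hb : forall i : 'I_n, exists q : rat, ratr q \in `](x 0 i), (x 0 i + r)[.
  by move=> i; apply: rat_in_itvoo; rewrite ltrDl.
have [fa Hfa] := choice ha; have [fb Hfb] := choice hb.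
exists (\row_i fa i, \row_i fb i); split.
  move=> i; rewrite !rqE /= !mxE.
  have := Hfa i; have := Hfb i; rewrite !in_itv /= => /andP[h1 _] /andP[_ h2].
  by rewrite h1 h2.
move=> y hy; apply: coord_ball => // i.
have := hy i; rewrite !rqE /= !mxE => /andP[h1 h2].
have := Hfa i; have := Hfb i; rewrite !in_itv /= => /andP[_ h3] /andP[h4 _].
rewrite ltr_norml; apply/andP; split; lra.
Qed.

Definition obq (O : set 'rV[R]_d.+1) (q : 'rV[rat]_d.+1 * 'rV[rat]_d.+1) : set V :=
  [set x | ob (rq q.1) (rq q.2) x /\ ob (rq q.1) (rq q.2) `<=` O].

Lemma open_bigcup_obq (O : set V) : open O -> O = \bigcup_q obq O q.
Proof.
move=> oO; apply/seteqP; split; last by move=> x [q _ [h1 h2]]; exact: h2.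
move=> x Ox; have : nbhs x O by apply: open_nbhs_nbhs; split.
move=> /nbhs_ballP[r r0 rO]; have [q [h1 h2]] := rat_box x r0.
by exists q => //; split => //; apply: subset_trans h2 rO.
Qed.

Lemma hs_CM i c : CM (hs i c).
Proof. exact: hs_cara. Qed.

Lemma ob_CM (a b : V) : CM (ob a b).
Proof.
have -> : ob a b = \bigcap_(i in [set: 'I_d.+1])
   (~` hs i (a 0 i) `&` \bigcup_n hs i (b 0 i - n.+1%:R^-1)).
  apply/seteqP; split => x.
    move=> h i _; have /andP[h1 h2] := h i; split.
      by move=> hh; move: (hh : x 0 i <= a 0 i); rewrite leNgt h1.
    have : 0 < b 0 i - x 0 i by rewrite subr_gt0.
    move=> /ltr_add_invr[k hk]; exists k => //; rewrite /hs /=.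
    move: hk; set u := _^-1; move=> hk; lra.
  move=> h i; have [h1 [k _ h2]] := h i I; apply/andP; split.
    by rewrite ltNge; apply/negP => hh; apply: h1.
  move: h2; rewrite /hs /=; set u := _^-1; have : 0 < u by rewrite invr_gt0 ltr0n.
  move=> u0 h2; lra.
apply: fin_bigcap_measurable; first exact: finite_finset.
move=> i _; apply: measurableI; first exact/measurableC/hs_CM.
by apply: bigcupT_measurable => k; exact: hs_CM.
Qed.

Lemma open_CM (O : set V) : open O -> CM O.
Proof.
move=> oO; rewrite (open_bigcup_obq oO).
apply: countable_bigcupT_measurable; first exact: countableP.
move=> q; have [h|h] := pselect (ob (rq q.1) (rq q.2) `<=` O).
  have -> : obq O q = ob (rq q.1) (rq q.2).
    by apply/seteqP; split => x; [case|move=> hx; split].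
  exact: ob_CM.
have -> : obq O q = set0 by apply/seteqP; split => x // [].
exact: measurable0.
Qed.

Lemma borel_CM (A : set (Rd R d.+1)) : measurable A -> CM A.
Proof.
move=> mA; apply: (smallest_sub _ _ mA).
  exact: sigma_algebra_measurable.
by move=> O oO; exact: open_CM.
Qed.

End PartC.

Import numFieldNormedType.Exports.
Section PartD.
Variables (R : realType) (d : nat).
Local Notation V := 'rV[R]_d.+1.
Local Open Scope ereal_scope.

Definition leb : set (Rd R d.+1) -> \bar R := @lam R d.

Let leb0 : leb set0 = 0. Proof. exact: lam0. Qed.
Let leb_ge0 A : 0 <= leb A. Proof. exact: lam_ge0. Qed.
Let leb_sigma : semi_sigma_additive leb.
Proof.
move=> F mF tF mU.
exact: (@caratheodory_measure_sigma_additive R V (@lam R d) F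
   (fun i => borel_CM (mF i)) tF (borel_CM mU)).
Qed.

HB.instance Definition _ := isMeasure.Build _ _ _ leb leb0 leb_ge0 leb_sigma.

End PartD.

Import numFieldNormedType.Exports.
Section PartE.
Variables (R : realType).
Local Notation rqR := (@rq R _).

Lemma open_Rd n (A : set 'rV[R]_n) : open A -> measurable (A : set (Rd R n)).
Proof. by move=> oA; apply: sub_sigma_algebra. Qed.

Lemma cont_mfun n m (f : 'rV[R]_n -> 'rV[R]_m) : continuous f ->
  measurable_fun (setT : set (Rd R n)) (f : Rd R n -> Rd R m).
Proof.
move=> cf; apply: (@measurability _ _ (Rd R n) (Rd R m) setT f open); first reflexivity.
move=> _ [W oW <-]; rewrite setTI; apply: open_Rd.
by apply: open_comp => // x _; exact: cf.
Qed.

Lemma ob_open n (a b : 'rV[R]_n) : open (ob a b).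
Proof.
suff : forall s : seq 'I_n, open [set x : 'rV[R]_n | forall i, i \in s -> a 0 i < x 0 i < b 0 i]%R.
  move=> /(_ (enum 'I_n)); congr open; apply/seteqP; split => x h i //.
  by apply: h; rewrite mem_enum.
elim => [|i s ih].
  have -> : [set x : 'rV[R]_n | forall i, i \in [::] -> (a 0 i < x 0 i < b 0 i)%R] = setT.
    by apply/seteqP; split => // x.
  exact: openT.
have -> : [set x : 'rV[R]_n | forall j, j \in i :: s -> (a 0 j < x 0 j < b 0 j)%R] =
   (fun x : 'rV[R]_n => x 0 i) @^-1` `](a 0 i), (b 0 i)[ `&`
   [set x : 'rV[R]_n | forall j, j \in s -> (a 0 j < x 0 j < b 0 j)%R].
  apply/seteqP; split => x.
    move=> h; split; last by move=> j js; apply: h; rewrite inE js orbT.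
    by rewrite /= in_itv /=; apply: h; rewrite inE eqxx.
  move=> [h1 h2] j; rewrite inE => /orP[/eqP ->|js]; last exact: h2.
  by move: h1; rewrite /= in_itv.
apply: openI => //; apply: open_comp; last exact: itv_open.
by move=> x _; exact: coord_continuous.
Qed.

Lemma ob_Rd n (a b : 'rV[R]_n) : measurable (ob a b : set (Rd R n)).
Proof. by apply: open_Rd; exact: ob_open. Qed.

Lemma sigma_finite_local n (mu : {measure set (Rd R n) -> \bar R}) :
  (forall x : 'rV[R]_n, exists U : set 'rV[R]_n, [/\ open U, U x & (mu U < +oo)%E]) ->
  sigma_finite setT mu.
Proof.
move=> hmu.
pose G (q : 'rV[rat]_n * 'rV[rat]_n) : set (Rd R n) :=
  if pselect (mu (ob (rqR q.1) (rqR q.2)) < +oo)%E then ob (rqR q.1) (rqR q.2) else set0.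
pose F (k : nat) : set (Rd R n) := if unpickle k is Some q then G q else set0.
exists F.
  apply/seteqP; split => // x _.
  have [U [oU Ux muU]] := hmu x.
  have : nbhs x U by apply: open_nbhs_nbhs; split.
  move=> /nbhs_ballP[r r0 rU]; have [q [h1 h2]] := rat_box x r0.
  exists (pickle q) => //; rewrite /F pickleK /G.
  case: pselect => //= -[]; apply: le_lt_trans muU; apply: le_measure.
  - by rewrite inE; exact: ob_Rd.
  - by rewrite inE; exact: open_Rd.
  - exact: subset_trans h2 rU.
move=> k; rewrite /F; case: (unpickle k) => [q|]; last by split => //; rewrite measure0.
rewrite /G; case: pselect => h /=; split => //.
- exact: ob_Rd.
- by rewrite measure0.
Qed.

Lemma sub_mfun n :
  measurable_fun (setT : set (Rd R n * Rd R n)) (fun z => (z.1 - z.2 : 'rV[R]_n) : Rd R n).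
Proof.
apply: (@measurability _ _ (Rd R n * Rd R n)%type (Rd R n) setT
  (fun z : Rd R n * Rd R n => (z.1 - z.2 : 'rV[R]_n) : Rd R n) open); first reflexivity.
move=> _ [W oW <-]; rewrite setTI.
pose Q := ('rV[rat]_n * 'rV[rat]_n)%type.
pose G (q : Q * Q) : set (Rd R n * Rd R n) :=
  if pselect (forall u v, ob (rqR q.1.1) (rqR q.1.2) u -> ob (rqR q.2.1) (rqR q.2.2) v -> W (u - v))
  then (ob (rqR q.1.1) (rqR q.1.2) : set (Rd R n)) `*` (ob (rqR q.2.1) (rqR q.2.2) : set (Rd R n))
  else set0.
have -> : (fun z : Rd R n * Rd R n => (z.1 - z.2 : 'rV[R]_n)) @^-1` W = \bigcup_q G q.
  apply/seteqP; split => z; last first.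
    move=> [q _]; rewrite /G; case: pselect => //= h [h1 h2].
    exact: h.
  move=> /= Oz.
  have : nbhs (z.1 - z.2) W by apply: open_nbhs_nbhs; split.
  move=> /nbhs_ballP[r r0 rO].
  have r20 : (0 < r / 2)%R by rewrite divr_gt0.
  have [q1 [h11 h12]] := rat_box z.1 r20.
  have [q2 [h21 h22]] := rat_box z.2 r20.
  exists (q1, q2) => //; rewrite /G; case: pselect => [_|] /=; first by split.
  apply; move=> u v hu hv; apply: rO; apply: coord_ball => // i.
  have := ball_coord (h12 _ hu) i; have := ball_coord (h22 _ hv) i.
  rewrite !mxE => ha hb.
  have -> : (z.1 0 i - z.2 0 i - (u 0 i - v 0 i) = (z.1 0 i - u 0 i) - (z.2 0 i - v 0 i))%R.
    by set a1 := z.1 0 i; set a2 := z.2 0 i; set a3 := u 0 i; set a4 := v 0 i; lra.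
  apply: le_lt_trans (ler_normB _ _) _.
  by rewrite (splitr r); apply: ltrD.
apply: countable_bigcupT_measurable; first exact: countableP.
move=> q; rewrite /G; case: pselect => _ /=; last exact: measurable0.
by apply: measurableX; exact: ob_Rd.
Qed.

End PartE.

Import numFieldNormedType.Exports.
Section PartF.
Variables (R : realType) (d : nat).
Local Notation V := 'rV[R]_d.+1.
Local Notation lamd := (@lam R d).

Lemma lnull_lam0 (A : set V) : lebesgue_null A -> lamd A = 0.
Proof.
move=> hA; apply/eqP; rewrite eq_le lam_ge0 andbT.
apply/lee_addgt0Pr => e e0; rewrite add0e.
have [a [b [hab hcov hsum]]] := hA e e0.
apply: le_trans (ltW hsum).
by apply: (@lam_le_cover R d A (fun n => (a n, b n))); split.
Qed.

Lemma lam0_lnull (A : set V) : lamd A = 0 -> lebesgue_null A.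
Proof.
move=> hA e e0.
have : (ereal_inf [set (\sum_(n <oo) (pvol (F n))%:E)%E | F in pcover A] < e%:E)%E.
  by rewrite -/(lam A) hA lte_fin.
move=> /ereal_inf_lt[_ [F [hF hcov] <-] hlt].
by exists (fun n => (F n).1), (fun n => (F n).2); split.
Qed.

Lemma box_vol_ge0 (a b : V) : (forall i, a 0 i <= b 0 i)%R -> (0 <= box_vol a b)%R.
Proof. by move=> h; apply: (@pvol_ge0 R d (a, b)). Qed.

Lemma lam_box (a b : V) : (forall i, a 0 i <= b 0 i)%R ->
  (lamd (box a b) <= (box_vol a b)%:E)%E.
Proof.
move=> hab.
pose F (n : nat) : V * V := if n == 0%N then (a, b) else (a, a).
have -> : ((box_vol a b)%:E = \sum_(n <oo) (pvol (F n))%:E)%E.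
  rewrite (@nneseries_split R _ 0 1); last first.
    move=> k _; rewrite lee_fin /F; case: ifP => _; apply: (@pvol_ge0 R d) => //= i.
  rewrite big_nat1 eseries0 ?adde0 // => k hk _.
  rewrite /F; case: ifP => [/eqP k0|_]; first by rewrite k0 in hk.
  by rewrite /pvol /box_vol big_ord_recl /= subrr mul0r.
apply: lam_le_cover; split.
  by move=> n i; rewrite /F; case: ifP => _ //=.
by move=> x hx; exists 0%N => //.
Qed.

Lemma lam_translate_le (A : set V) (h : V) : (lamd (translate A h) <= lamd A)%E.
Proof.
apply: le_ereal_inf_tmp => _ [F [hF AF] <-].
pose G (n : nat) : V * V := (((F n).1 + h)%R, ((F n).2 + h)%R).
have -> : (\sum_(n <oo) (pvol (F n))%:E = \sum_(n <oo) (pvol (G n))%:E)%E.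
  apply: eq_eseriesr => n _; congr (_%:E); rewrite /pvol /box_vol.
  by apply: eq_bigr => i _; rewrite /G /= !mxE; set u := (F n).1 0 i; set v := (F n).2 0 i;
    set w := h 0 i; lra.
apply: lam_le_cover; split.
  by move=> n i; rewrite /G /= !mxE lerD2r; apply: hF.
move=> _ [x Ax <-]; have [n _ hn] := AF x Ax; exists n => // i.
by rewrite /G /= !mxE !lerD2r; apply: hn.
Qed.

Lemma translateK (A : set V) (h : V) : translate (translate A h) (- h)%R = A.
Proof.
apply/seteqP; split => x.
  by move=> [_ [y Ay <-] <-]; rewrite addrK.
by move=> Ax; exists (x + h); [exists x|rewrite addrK].
Qed.

Lemma lam_translate (A : set V) (h : V) : lamd (translate A h) = lamd A.
Proof.
apply/eqP; rewrite eq_le lam_translate_le /=.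
by rewrite -{1}(translateK A h) lam_translate_le.
Qed.

Lemma box_closed (a b : V) : closed (box a b).
Proof.
have -> : box a b = \bigcap_(i in [set: 'I_d.+1]) ((fun x : V => x 0 i) @^-1` `[a 0 i, b 0 i]).
  apply/seteqP; split => x.
    by move=> h i _; rewrite /= in_itv /=; apply: h.
  by move=> h i; have := h i I; rewrite /= in_itv.
apply: closed_bigI => i _; apply: preimage_closed; last exact: itv_closed.
by move=> x _; exact: coord_continuous.
Qed.

Lemma box_Rd (a b : V) : measurable (box a b : set (Rd R d.+1)).
Proof.
rewrite -[box a b]setCK; apply: measurableC; apply: open_Rd.
by rewrite openC; apply: box_closed.
Qed.

End PartF.

Import numFieldNormedType.Exports.
Section PartG.
Variables (R : realType) (d : nat).
Local Notation V := 'rV[R]_d.+1.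
Local Notation lamd := (@lam R d).

Definition Kbox (a b : V) : R :=
  \sum_(i < d.+1) \prod_(j < d.+1 | j != i) (b 0 j - a 0 j).

Lemma Kbox_ge0 (a b : V) : (forall i, a 0 i <= b 0 i) -> 0 <= Kbox a b.
Proof.
move=> h; apply: sumr_ge0 => i _; apply: prodr_ge0 => j _; rewrite subr_ge0; exact: h.
Qed.

Lemma lam_box_shift (a b : V) (del : R) (h : V) :
  (forall i, a 0 i <= b 0 i) -> 0 <= del -> (forall i, `|h 0 i| <= del) ->
  (lamd (box a b `\` translate (box a b) h) <= (2 * del * Kbox a b)%:E)%E.
Proof.
move=> hab del0 hh.
pose lo (i : 'I_d.+1) : V * V := (setc a i id, setc b i (fun _ => a 0 i + del)).
pose hi (i : 'I_d.+1) : V * V := (setc a i (fun _ => b 0 i - del), setc b i id).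
pose S (i : 'I_d.+1) : set V := box (lo i).1 (lo i).2 `|` box (hi i).1 (hi i).2.
have hlo i j : (lo i).1 0 j <= (lo i).2 0 j.
  rewrite /lo /= !setcE; case: ifP => [/eqP ->|_]; last exact: hab.
  by rewrite lerDl.
have hhi i j : (hi i).1 0 j <= (hi i).2 0 j.
  rewrite /hi /= !setcE; case: ifP => [/eqP ->|_]; last exact: hab.
  by rewrite lerBlDr lerDl.
have volS i : (lamd (S i) <= (2 * del * \prod_(j < d.+1 | j != i) (b 0 j - a 0 j))%:E)%E.
  apply: le_trans (outer_measureU2 lamd _ _) _.
  apply: le_trans (leeD (lam_box (hlo i)) (lam_box (hhi i))) _.
  rewrite /lo /hi /= !box_vol_setc /= -EFinD lee_fin.
  set P := \prod_(_ < _ | _) _; set u := a 0 i; set v := b 0 i.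
  have -> : (u + del - u) * P + (v - (v - del)) * P = 2 * del * P by ring.
  by [].
pose F (k : nat) : set V := S (inord k).
have sub : box a b `\` translate (box a b) h `<=` \big[setU/set0]_(k < d.+1) F k.
  rewrite -bigcup_mkord => x [xb xnt].
  have [i hi_] : exists i, ~ (a 0 i <= x 0 i - h 0 i <= b 0 i).
    apply/existsNP => hall; apply: xnt; exists (x - h); last by rewrite subrK.
    by move=> i; rewrite !mxE; apply: hall.
  exists (val i) => /=; first by [].
  rewrite /F inord_val /S.
  have /andP[xa xb'] := xb i.
  have hhi' := hh i; rewrite ler_norml in hhi'; have /andP[hh1 hh2] := hhi'.
  have [hl|hr] : x 0 i - h 0 i < a 0 i \/ b 0 i < x 0 i - h 0 i.
    case: (ltP (x 0 i - h 0 i) (a 0 i)) => [|h1]; first by left.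
    by right; rewrite ltNge; apply/negP => h2; apply: hi_; rewrite h1 h2.
  - left => j; rewrite /lo /= !setcE; case: ifP => [/eqP ->|_]; last exact: xb.
    by rewrite xa /=; lra.
  - right => j; rewrite /hi /= !setcE; case: ifP => [/eqP ->|_]; last exact: xb.
    by rewrite xb' andbT; lra.
apply: le_trans (le_outer_measure lamd _ _ sub) _.
apply: le_trans (outer_measure_subadditive lamd F d.+1) _.
rewrite /Kbox mulr_sumr -sumEFin; apply: lee_sum => i _.
by rewrite /F inord_val; exact: volS.
Qed.

End PartG.

Import numFieldNormedType.Exports.
Section PartH.
Variables (R : realType) (d : nat).
Local Notation V := 'rV[R]_d.+1.
Local Notation lamd := (@lam R d).
Local Notation L := (@leb R d).

Lemma efin_bound (x : \bar R) (r : R) : (0 <= x)%E -> (x <= r%:E)%E -> x = (fine x)%:E.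
Proof.
move=> x0 xr; rewrite fineK // ge0_fin_numE //; exact: le_lt_trans xr (ltry _).
Qed.

Lemma efin_sub_lt (a b : \bar R) (r : R) : a \is a fin_num -> b \is a fin_num ->
  fine a - r < fine b -> (a - b < r%:E)%E.
Proof. by move: a b => [a| |] [b| |] //= _ _ h; rewrite -EFinB lte_fin; lra. Qed.

Lemma lam_shift_small (Om : set V) : measurable (Om : set (Rd R d.+1)) ->
  (lamd Om < +oo)%E -> forall e : R, 0 < e ->
  exists2 del : R, 0 < del & forall h : V, (forall i, `|h 0 i| <= del) ->
    (lamd (Om `\` translate Om h) < e%:E)%E.
Proof.
move=> mOm OmF e e0.
have e4 : 0 < e / 4 by rewrite divr_gt0.
have mfin : lamd Om \is a fin_num by rewrite ge0_fin_numE ?lam_ge0.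
have : (lamd Om < lamd Om + (e / 4)%:E)%E by rewrite lteDl.
rewrite {1}/lam => /ereal_inf_lt[_ [F [hF hcov] <-] hsum].
pose C : set (Rd R d.+1) := \bigcup_n pbox (F n).
have mbox n : measurable (pbox (F n) : set (Rd R d.+1)) by apply: box_Rd.
have mC : measurable C by apply: bigcupT_measurable.
have OmC : Om `<=` C := hcov.
have LC : (L C <= \sum_(n <oo) (pvol (F n))%:E)%E by apply: lam_le_cover; split.
have LCfin : L C \is a fin_num.
  rewrite ge0_fin_numE ?measure_ge0 //; apply: le_lt_trans LC _.
  by apply: lt_trans hsum _; rewrite -(fineK mfin) -EFinD ltry.
have hCOm : (L (C `\` Om) < (e / 4)%:E)%E.
  have := measureDI L mC mOm; rewrite setIidr // => hD.
  have : (L (C `\` Om) + lamd Om < (e / 4)%:E + lamd Om)%E.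
    by rewrite -hD addeC; apply: le_lt_trans LC hsum.
  by rewrite lteD2rE.
pose U (N : nat) : set (Rd R d.+1) := \bigcup_(n in [set k | (k < N)%N]) pbox (F n).
have mU N : measurable (U N) by apply: bigcup_measurable => k _.
have UC N : U N `<=` C by move=> x [n _ hn]; exists n.
have ndU : {homo U : n m / (n <= m)%N >-> (n <= m)%O}.
  move=> n m nm; apply/subsetPset => x [k /= kn hk]; exists k => //=.
  exact: leq_trans kn nm.
have UCeq : \bigcup_N U N = C.
  apply/seteqP; split => x; first by move=> [N _ /UC].
  by move=> [n _ hn]; exists n.+1 => //; exists n => /=.
have cvU : (L \o U) x @[x --> \oo] --> L C.
  by rewrite -UCeq; apply: nondecreasing_cvg_mu => //; rewrite UCeq.
have hsup : (L C <= ereal_sup (range (L \o U)))%E.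
  rewrite -(cvg_lim _ cvU) //; apply: lime_le; first by apply/cvg_ex; exists (L C).
  by apply: nearW => n; apply: ereal_sup_ubound; exists n.
have : (L C - (e / 4)%:E < ereal_sup (range (L \o U)))%E.
  apply: lt_le_trans hsup; rewrite -(fineK LCfin) -EFinB lte_fin; lra.
move=> /ereal_sup_gt[_ [N _ <-]] /= hN.
have LUNfin : L (U N) \is a fin_num.
  rewrite ge0_fin_numE ?measure_ge0 //; apply: le_lt_trans _ (_ : L C < +oo)%E.
    by apply: le_measure => //; rewrite inE.
  by rewrite -ge0_fin_numE ?measure_ge0.
have hCU : (L (C `\` U N) < (e / 4)%:E)%E.
  rewrite measureD //; last by rewrite -ge0_fin_numE ?measure_ge0.
  rewrite setIidr //; apply: efin_sub_lt; [exact: LCfin|exact: LUNfin|].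
  by move: hN; rewrite -(fineK LCfin) -(fineK LUNfin) -!EFinB !lte_fin /=; lra.
pose K := \sum_(n < N) Kbox (F n).1 (F n).2.
have K0 : 0 <= K by apply: sumr_ge0 => n _; apply: Kbox_ge0; exact: hF.
pose del := e / (8 * (K + 1)).
have del0 : 0 < del by rewrite divr_gt0 // mulr_gt0 // ltr_pwDr.
have delK : 8 * (del * K) + 8 * del = e.
  rewrite /del; field; have K1 : 0 < K + 1 by apply: (le_lt_trans K0); rewrite ltrDl.
  by rewrite gt_eqF.
exists del => // h hh.
pose G (n : nat) : set V := pbox (F n) `\` translate (pbox (F n)) h.
pose B := \big[setU/set0]_(n < N) G n.
have sub : Om `\` translate Om h `<=` ((C `\` U N) `|` B) `|` translate (C `\` Om) h.
  move=> x [Omx xnt].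
  have [UNx|nUNx] := pselect (U N x); last by left; left; split => //; exact: OmC.
  have [tUx|ntUx] := pselect (translate (U N) h x).
    right; case: tUx => y Uy yx; exists y => //; split; first exact: (UC N y Uy).
    by move=> Omy; apply: xnt; exists y.
  left; right; case: UNx => n /= nN hn.
  rewrite /B -(bigcup_mkord N G); exists n => //; split => // -[y hy yx].
  by apply: ntUx; exists y => //; exists n.
have hB : (lamd B <= (2 * del * K)%:E)%E.
  apply: le_trans (outer_measure_subadditive lamd G N) _.
  rewrite /K mulr_sumr -sumEFin; apply: lee_sum => n _.
  apply: lam_box_shift; [exact: hF | exact: ltW | exact: hh].
have hU : (lamd (Om `\` translate Om h) <=
    (lamd (C `\` U N) + lamd B) + lamd (translate (C `\` Om) h))%E.
  apply: le_trans (le_outer_measure lamd _ _ sub) _.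
  apply: le_trans (outer_measureU2 lamd _ _) _.
  apply: leeD2r; exact: outer_measureU2.
rewrite lam_translate in hU.
have h1 : (lamd (C `\` U N) < (e/4)%:E)%E := hCU.
have h2 : (lamd (C `\` Om) < (e/4)%:E)%E := hCOm.
apply: le_lt_trans hU _.
have eq1 := efin_bound (lam_ge0 _) (ltW h1).
have eq2 := efin_bound (lam_ge0 _) (ltW h2).
have eq3 := efin_bound (lam_ge0 _) hB.
rewrite eq1 in h1 *; rewrite eq2 in h2 *; rewrite eq3 in hB *.
rewrite !lte_fin in h1 h2; rewrite lee_fin in hB.
rewrite -!EFinD lte_fin.
rewrite -mulrA in hB; move: hB delK; set P := del * K => hB delK; lra.
Qed.

End PartH.

Import numFieldNormedType.Exports.

Definition musf (R : realType) (n : nat) (mu : {measure set (Rd R n) -> \bar R})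
  (hmu : sigma_finite setT mu) : set (Rd R n) -> \bar R := mu.
HB.instance Definition _ (R : realType) (n : nat) (mu : {measure set (Rd R n) -> \bar R})
  (hmu : sigma_finite setT mu) := Measure.copy (@musf R n mu hmu) mu.
HB.instance Definition _ (R : realType) (n : nat) (mu : {measure set (Rd R n) -> \bar R})
  (hmu : sigma_finite setT mu) := Measure_isSigmaFinite.Build _ _ _ (@musf R n mu hmu) hmu.

Section Main.
Variables (R : realType) (d : nat).
Local Notation V := 'rV[R]_d.+1.
Local Notation T := (Rd R d.+1).
Local Notation lamd := (@lam R d).

Lemma leb_sigma : sigma_finite setT (@leb R d).
Proof.
apply: sigma_finite_local => x.
exists (ball x 1); split; [exact: ball_open | exact: ballxx | ].
have hle : forall i, (x - const_mx 1) 0 i <= (x + const_mx 1) 0 i.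
  by move=> i; rewrite !mxE; lra.
apply: (@le_lt_trans _ _ (lamd (box (x - const_mx 1) (x + const_mx 1)))).
  apply: le_lam => y /ball_coord h i; rewrite !mxE; have := h i.
  by rewrite ltr_norml => /andP[h1 h2]; apply/andP; split; lra.
exact: le_lt_trans (lam_box hle) (ltry _).
Qed.

Lemma bounded_lam (Om : set V) : bounded_set Om -> (lamd Om < +oo)%E.
Proof.
move=> [M [_ hM]].
have := hM (`|M| + 1); rewrite (_ : M < `|M| + 1) //; last first.
  by apply: (le_lt_trans (ler_norm M)); rewrite ltrDl.
move=> /(_ isT) sub; set c := `|M| + 1 + 1.
have hle : forall i, (- const_mx c : V) 0 i <= (const_mx c : V) 0 i.
  move=> i; rewrite !mxE; have : 0 <= `|M| by []; rewrite /c; lra.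
apply: (@le_lt_trans _ _ (lamd (box (- const_mx c) (const_mx c)))).
  apply: le_lam => x /sub /= hx i.
  have hb : ball (0 : V) c x.
    rewrite mx_norm_ball /ball_ /= sub0r normrN; apply: le_lt_trans hx _; rewrite /c ltrDl //.
  have := ball_coord hb i; rewrite !mxE sub0r normrN ltr_norml => /andP[h1 h2].
  by apply/andP; split; lra.
exact: le_lt_trans (lam_box hle) (ltry _).
Qed.


Lemma main_succ (Om Sig : set T) (mu : {measure set T -> \bar R}) :
  measurable Om -> bounded_set (Om : set V) -> locally_finite mu ->
  measurable Sig ->
  lebesgue_null [set x : V | ~ Sig x /\ conv_ind mu Om x <> 0%E] ->
  forall t : V, msupport mu t ->
    lebesgue_null (translate Om t `&` ~` (Sig : set V)).
Proof.
move=> mOm bOm lfmu mSig hN t supt.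
have mus : sigma_finite setT mu := sigma_finite_local lfmu.
pose lebm := Measure.clone _ _ _ (@leb R d) _.
pose m1 := SigmaFiniteMeasure.clone _ _ _ (@musf R d.+1 lebm leb_sigma) _.
pose m2 := SigmaFiniteMeasure.clone _ _ _ (@musf R d.+1 mu mus) _.
pose A0 : set (T * T) := [set z | Om (z.1 - z.2)].
have mA0 : measurable A0 by have := sub_mfun measurableT mOm; rewrite setTI.
pose conv : T -> \bar R := conv_ind mu Om.
have mconv := indic_measurable_fun_fubini_tonelli_F m2 mA0.
have convE : forall x, conv x = fubini_F m2 (EFin \o \1_A0) x.
  move=> x; rewrite /conv /conv_ind /fubini_F; apply: eq_integral => y _ /=.
  rewrite /indic /A0; congr ((_ : bool)%:R%:E); apply/idP/idP; rewrite !inE /= //. 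
pose B : set T := ~` Sig `&` [set x | conv x = 0%E].
have mB : measurable B.
  apply: measurableI; first exact: measurableC.
  have := mconv measurableT _ (measurable_realfun.emeasurable_set1 0%E); rewrite setTI.
  congr measurable; apply/seteqP; split => x /=; by rewrite convE.
pose A : set (T * T) := (B `*` setT) `&` A0.
have mA : measurable A by apply: measurableI => //; apply: measurableX.
have tt := indic_fubini_tonelli m1 m2 mA.
rewrite (indic_fubini_tonelli_FE m2 mA) (indic_fubini_tonelli_GE m1 mA) in tt.
have F0 : forall x, m2 (xsection A x) = 0%E.
  move=> x; have [Bx|nBx] := pselect (B x).
    have -> : xsection A x = xsection A0 x.
      apply/seteqP; split => y; rewrite /xsection /= !inE.
        by move=> [_ h]. 
      by move=> h; split.
    have <- : conv x = m2 (xsection A0 x).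
      have hI : (\int[m2]_(y in setT) (\1_(xsection A0 x) y)%:E = m2 (xsection A0 x `&` setT))%E.
        by apply: integral_indic => //; exact: measurable_xsection.
      rewrite setIT in hI; rewrite -hI /conv /conv_ind.
      apply: eq_integral => y _; congr (_%:E); rewrite /indic /xsection.
      by congr ((_ : bool)%:R); apply/idP/idP; rewrite !inE /= !inE.
    by case: Bx.
  have -> : xsection A x = set0.
    apply/seteqP; split => y //; rewrite /xsection /= inE.
    by move=> [[]].
  exact: measure0.
rewrite (_ : (fun x => m2 (xsection A x)) = fun=> 0%E) in tt; last by apply: funext => x; rewrite /= F0.
rewrite integral0 in tt.
pose phi y := m1 (ysection A y).
have phi0 y : (0 <= phi y)%E by exact: measure_ge0.
have mphi := indic_measurable_fun_fubini_tonelli_G m1 mA.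
rewrite (indic_fubini_tonelli_GE m1 mA) in mphi.
have : ae_eq m2 setT phi (cst 0%E).
  apply/(ae_eq_integral_abs m2 measurableT mphi).
  rewrite [RHS]tt; apply: eq_integral => y _; rewrite gee0_abs //.
move=> [N0 [mN0 muN0 hN0]].
have phit : phi t = 0%E.
  apply/eqP; apply: contraT => phitn0.
  have phitpos : (0 < phi t)%E by rewrite lt0e phitn0 phi0.
  have ysub y : ysection A y `<=` translate Om y.
    move=> x; rewrite /ysection /= inE => -[_ h]; exists (x - y) => //; exact: subrK.
  have phitF : (phi t < +oo)%E.
    apply: (@le_lt_trans _ _ (lamd (translate Om t))); first exact: le_lam.
    by rewrite lam_translate; apply: bounded_lam.
  have phifin : phi t \is a fin_num by rewrite ge0_fin_numE.
  set e := fine (phi t).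
  have e0 : 0 < e by rewrite -lte_fin /e fineK.
  have [del del0 hdel] := lam_shift_small mOm (bounded_lam bOm) e0.
  have ballN : ball t del `<=` N0.
    move=> y bty; apply: hN0 => /= hy; move: (hy I) => phiy.
    have hh : forall i, `|(y - t) 0 i| <= del.
      move=> i; rewrite !mxE distrC; apply: ltW; exact: ball_coord bty i.
    have := hdel _ hh; apply/negP; rewrite -leNgt.
    have inc : ysection A t `<=` ysection A y `|` translate (Om `\` translate Om (y - t)) t.
      move=> x; rewrite /ysection /= !inE => -[Bx Omx].
      have [Omy|nOmy] := pselect (Om (x - y)).
        by left; split => //; split => //; case: Bx.
      right; exists (x - t) => //; last exact: subrK.
      split => // -[z Omz zeq]; apply: nOmy.
      by have -> : x - y = z by rewrite -(addrK (y - t) z) zeq opprB addrA subrK.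
    have : (lamd (ysection A t) <= lamd (ysection A y) +
        lamd (translate (Om `\` translate Om (y - t)) t))%E.
      by apply: le_trans (le_lam inc) _; exact: outer_measureU2.
    rewrite lam_translate (_ : lamd (ysection A y) = phi y) // phiy add0e.
    by rewrite (_ : lamd (ysection A t) = phi t) // -/e -[phi t]fineK.
  have := supt (ball t del) (ball_open _ _) (ballxx _ del0).
  rewrite ltNge => /negP h; exfalso; apply: h; rewrite -muN0.
  apply: le_measure => //; rewrite inE //; exact: open_Rd (ball_open _ _).
apply: lam0_lnull; apply/eqP; rewrite eq_le lam_ge0 andbT.
pose N := [set x : V | ~ Sig x /\ conv_ind mu Om x <> 0%E].
have inc : translate Om t `&` ~` (Sig : set V) `<=` N `|` ysection A t.
  move=> _ [[z Omz <-] nS].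
  have [c0|c0] := pselect (conv (z + t) = 0%E).
    right; rewrite /ysection /= inE; split; first by split.
    by rewrite /A0 /= addrK.
  by left.
apply: le_trans (le_lam inc) _.
have : (lamd (N `|` ysection A t) <= lamd N + lamd (ysection A t))%E by exact: outer_measureU2.
move=> /le_trans; apply.
rewrite (lnull_lam0 hN) add0e.
by rewrite (_ : lamd (ysection A t) = phi t) // phit.
Qed.

End Main.

Lemma lnull_dim0 (R : realType) (A : set 'rV[R]_0) : ~ lebesgue_null A.
Proof.
move=> /(_ 1 ltr01) [a [b [_ _ hs]]].
have h1 : forall n, box_vol (a n) (b n) = 1 by move=> n; rewrite /box_vol big_ord0.
have := @nneseries_lim_ge R (fun n => (box_vol (a n) (b n))%:E) xpredT 0 2.
rewrite big_mkord !big_ord_recl big_ord0 /= !h1 => /(_ _)/wrap[].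
  by move=> n _ _; rewrite h1 lee_fin.
move=> h; have := le_lt_trans h hs; rewrite adde0 -EFinD lte_fin; lra.
Qed.

Unset Implicit Arguments.
Theorem lemma2p5 (R : realType) (d : nat) (Om Sig : set (Rd R d))
  (mu : {measure set (Rd R d) -> \bar R}) :
  measurable Om -> bounded_set (Om : set 'rV[R]_d) ->
  locally_finite mu ->
  measurable Sig ->
  lebesgue_null [set x : 'rV[R]_d | ~ Sig x /\ conv_ind mu Om x <> 0%E] ->
  forall t : 'rV[R]_d, msupport mu t ->
    lebesgue_null (translate Om t `&` ~` (Sig : set 'rV[R]_d)).
Proof.
destruct d as [|d'].
  by move=> _ _ _ _ /lnull_dim0.
exact: main_succ.
Qed.
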